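(* In the Markov decision process setting below, assume (H0), (H1), (H2) hold for the associated fixed-point problem. Then for any $v^0\in\mathbb{R}^M$, the iterates $(v^\ell)_{\ell\ge1}$ of policy iteration converge to the vector $v\in\mathbb{R}^M$ with components $$v_i=\sup_{P\in\mathcal{P}}\mathbb{E}\Big[\sum_{n=0}^\infty U(X^n,P)\prod_{m=0}^{n-1}D(X^m,P)\,\Big|\,X^0=i\Big],\quad 1\le i\le M.$$
   Context: MDP setting: $\rho>0$; $\mathcal{P}=\prod_i(\mathcal{W}_i\times\mathcal{Z}_i\times\mathcal{D}_i)$ with $\mathcal{D}_i$ nonempty subsets of $\{0,1\}$ and $\mathcal{W}_i,\mathcal{Z}_i$ nonempty sets of probability vectors in $\mathbb{R}^M$ (nonnegative entries summing to 1); functions $c_i:\mathcal{W}_i\to\mathbb{R}$, $k_i:\mathcal{Z}_i\to\mathbb{R}$. For $P=(w,z,\psi)\in\mathcal{P}$, $(X^n)_{n\ge0}$ is the homogeneous Markov chain on $\{1,\dots,M\}$ with $\mathbb{P}(X^{n+1}=j\mid X^n=i)=w_{ij}$ if $\psi_i=0$ and $=z_{ij}$ if $\psi_i=1$; $U(i,P)=c_i(w_i)$ if $\psi_i=0$, $=k_i(z_i)$ if $\psi_i=1$; $D(i,P)=1/(1+\rho)$ if $\psi_i=0$, $=1$ if $\psi_i=1$. Associated fixed-point problem: $[L(w)]_{ij}=w_{ij}/(1+\rho)$, $[B(z)]_{ij}=z_{ij}$, $[c(w)]_i=c_i(w_i)$, $[k(z)]_i=k_i(z_i)$, and for some $\delta>0$,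 $A(P)=(I-\Psi)(I-L(w))+\delta\Psi(I-B(z))$, $b(P)=(I-\Psi)c(w)+\delta\Psi k(z)$, $\Psi=\operatorname{diag}(\psi)$; order and suprema componentwise. Policy iteration: given $v^0$, for $\ell\ge1$ choose $P^\ell$ with $-A(P^\ell)v^{\ell-1}+b(P^\ell)=\sup_{P}\{-A(P)v^{\ell-1}+b(P)\}$ and let $v^\ell$ solve $A(P^\ell)v^\ell=b(P^\ell)$. (H0): $P\mapsto A(P)^{-1}$ is bounded on $\{P: A(P)\text{ nonsingular}\}$. (H1): (i) $A,b$ bounded on $\mathcal{P}$; (ii) for every $x$ the supremum $\sup_P\{-A(P)x+b(P)\}$ is attained by some $P_x\in\mathcal{P}$. (H2): for each $P=(w,z,\psi)$ and each $i$ with $\psi_i=1$ there is a path in the directed graph of $B(z)$ (edge $i\to j$ iff $[B(z)]_{ij}\ne0$; trivial paths allowed) from $i$ to some $j$ with $\psi_j=0$. *)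

(* Defs.v *)
(* classical real numbers (Reals). States are indexed 0..M-1. *)
From Stdlib Require Import Reals List Relations.
Open Scope R_scope.

Fixpoint sumR (n : nat) (f : nat -> R) : R :=
  match n with O => 0 | S n' => sumR n' f + f n' end.
Fixpoint prodR (n : nat) (f : nat -> R) : R :=
  match n with O => 1 | S n' => prodR n' f * f n' end.

(* vectors in R^M : nat -> R (entries >= M irrelevant); matrices : nat -> nat -> R *)
Definition prob_vec (M : nat) (p : nat -> R) : Prop :=
  (forall j, (j < M)%nat -> 0 <= p j) /\ sumR M p = 1.

(* a policy P = (w, z, psi); w i, z i are the rows; psi i = true means psi_i = 1 *)
Record policy := mkPolicy {
  pw : nat -> nat -> R;
  pz : nat -> nat -> R;
  ppsi : nat -> bool }.

Definition in_Pset (M : nat) (W Z : nat -> (nat -> R) -> Prop) (Dset : nat -> bool -> Prop)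
  (P : policy) : Prop :=
  forall i, (i < M)%nat -> W i (pw P i) /\ Z i (pz P i) /\ Dset i (ppsi P i).

(* transition matrix of the Markov chain X^n under P *)
Definition trans (P : policy) (i j : nat) : R :=
  if ppsi P i then pz P i j else pw P i j.
Definition Ufun (c k : nat -> (nat -> R) -> R) (P : policy) (i : nat) : R :=
  if ppsi P i then k i (pz P i) else c i (pw P i).
Definition Dfun (rho : R) (P : policy) (i : nat) : R :=
  if ppsi P i then 1 else / (1 + rho).

(* sum over all state sequences l = [x_1; ...; x_N] with x_m in {0..M-1} *)
Fixpoint path_sum (M N : nat) (F : list nat -> R) : R :=
  match N with
  | O => F nil
  | S N' => sumR M (fun j => path_sum M N' (fun l => F (j :: l)))
  end.

(* E[ sum_{n=0}^{N} U(X^n,P) prod_{m<n} D(X^m,P) | X^0 = i ], computed as the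
   sum over paths (x_0 = i, x_1, ..., x_N) of (path probability) * (payoff). *)
Definition partial_expect (M : nat) (rho : R) (c k : nat -> (nat -> R) -> R)
  (P : policy) (i N : nat) : R :=
  path_sum M N (fun l =>
    let p := i :: l in
    prodR N (fun m => trans P (nth m p O) (nth (S m) p O)) *
    sumR (S N) (fun n => Ufun c k P (nth n p O) *
                         prodR n (fun m => Dfun rho P (nth m p O)))).

(* expected infinite-horizon value: limit of the truncated expectations *)
Definition has_value (M : nat) (rho : R) (c k : nat -> (nat -> R) -> R)
  (P : policy) (i : nat) (r : R) : Prop :=
  Un_cv (fun N => partial_expect M rho c k P i N) r.

Definition Id (i j : nat) : R := if Nat.eqb i j then 1 else 0.

(* A(P) = (I - Psi)(I - L(w)) + delta Psi (I - B(z)), written row-wise *)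
Definition Amat (rho delta : R) (P : policy) (i j : nat) : R :=
  if ppsi P i then delta * (Id i j - pz P i j)
  else Id i j - pw P i j / (1 + rho).
(* b(P) = (I - Psi) c(w) + delta Psi k(z) *)
Definition bvec (delta : R) (c k : nat -> (nat -> R) -> R) (P : policy) (i : nat) : R :=
  if ppsi P i then delta * k i (pz P i) else c i (pw P i).

Definition matvec (M : nat) (A : nat -> nat -> R) (x : nat -> R) (i : nat) : R :=
  sumR M (fun j => A i j * x j).
Definition matmul (M : nat) (A B : nat -> nat -> R) (i j : nat) : R :=
  sumR M (fun l => A i l * B l j).

Definition is_inverse (M : nat) (A B : nat -> nat -> R) : Prop :=
  forall i j, (i < M)%nat -> (j < M)%nat ->
    matmul M A B i j = Id i j /\ matmul M B A i j = Id i j.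

Definition PIobj (M : nat) (rho delta : R) (c k : nat -> (nat -> R) -> R)
  (P : policy) (x : nat -> R) (i : nat) : R :=
  - matvec M (Amat rho delta P) x i + bvec delta c k P i.

Definition H0 (M : nat) (W Z : nat -> (nat -> R) -> Prop) (Dset : nat -> bool -> Prop)
  (rho delta : R) : Prop :=
  exists C, forall P B, in_Pset M W Z Dset P -> is_inverse M (Amat rho delta P) B ->
    forall i j, (i < M)%nat -> (j < M)%nat -> Rabs (B i j) <= C.

Definition H1 (M : nat) (W Z : nat -> (nat -> R) -> Prop) (Dset : nat -> bool -> Prop)
  (rho delta : R) (c k : nat -> (nat -> R) -> R) : Prop :=
  (exists C, forall P, in_Pset M W Z Dset P ->
     forall i j, (i < M)%nat -> (j < M)%nat ->
       Rabs (Amat rho delta P i j) <= C /\ Rabs (bvec delta c k P i) <= C) /\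
  (forall x : nat -> R, exists Px, in_Pset M W Z Dset Px /\
     forall i, (i < M)%nat ->
       is_lub (fun r => exists P, in_Pset M W Z Dset P /\ r = PIobj M rho delta c k P x i)
              (PIobj M rho delta c k Px x i)).

Definition Bedge (M : nat) (P : policy) (a b : nat) : Prop :=
  (a < M)%nat /\ (b < M)%nat /\ pz P a b <> 0.
Definition H2 (M : nat) (W Z : nat -> (nat -> R) -> Prop) (Dset : nat -> bool -> Prop) : Prop :=
  forall P, in_Pset M W Z Dset P -> forall i, (i < M)%nat -> ppsi P i = true ->
    exists j, (j < M)%nat /\ ppsi P j = false /\ clos_refl_trans nat (Bedge M P) i j.

(* policy iteration: (Pseq l, vseq l)_{l>=1} generated from vseq 0 = v^0 *)
Definition policy_iteration (M : nat) (W Z : nat -> (nat -> R) -> Prop)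
  (Dset : nat -> bool -> Prop) (rho delta : R) (c k : nat -> (nat -> R) -> R)
  (Pseq : nat -> policy) (vseq : nat -> nat -> R) : Prop :=
  forall l, (1 <= l)%nat ->
    in_Pset M W Z Dset (Pseq l) /\
    (forall i, (i < M)%nat ->
       is_lub (fun r => exists P, in_Pset M W Z Dset P /\
                          r = PIobj M rho delta c k P (vseq (l - 1)%nat) i)
              (PIobj M rho delta c k (Pseq l) (vseq (l - 1)%nat) i)) /\
    (forall i, (i < M)%nat ->
       matvec M (Amat rho delta (Pseq l)) (vseq l) i = bvec delta c k (Pseq l) i).

(* Main.v *)
Require Import Defs.
From Stdlib Require Import Reals List Relations Lra Lia FunctionalExtensionality.
Open Scope R_scope.

Lemma sumR_ext n f g : (forall j, (j < n)%nat -> f j = g j) -> sumR n f = sumR n g.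
Proof. induction n; intros H; simpl; auto. rewrite IHn by (intros; apply H; lia). rewrite H by lia. auto. Qed.

Lemma sumR_add n f g : sumR n (fun j => f j + g j) = sumR n f + sumR n g.
Proof. induction n; simpl; [lra|]. rewrite IHn; lra. Qed.

Lemma sumR_minus n f g : sumR n (fun j => f j - g j) = sumR n f - sumR n g.
Proof. induction n; simpl; [lra|]. rewrite IHn; lra. Qed.

Lemma sumR_scal n a f : sumR n (fun j => a * f j) = a * sumR n f.
Proof. induction n; simpl; [lra|]. rewrite IHn; lra. Qed.

Lemma sumR_scal_r n a f : sumR n (fun j => f j * a) = sumR n f * a.
Proof. induction n; simpl; [lra|]. rewrite IHn; lra. Qed.

Lemma sumR_zero n : sumR n (fun _ => 0) = 0.
Proof. induction n; simpl; [lra|]. rewrite IHn; lra. Qed.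

Lemma sumR_le n f g : (forall j, (j < n)%nat -> f j <= g j) -> sumR n f <= sumR n g.
Proof. induction n; intros H; simpl; [lra|]. assert (H1 := H n (Nat.lt_succ_diag_r n)).
 assert (sumR n f <= sumR n g) by (apply IHn; intros; apply H; lia). lra. Qed.

Lemma sumR_nonneg n f : (forall j, (j < n)%nat -> 0 <= f j) -> 0 <= sumR n f.
Proof. intros H. rewrite <- (sumR_zero n). apply sumR_le. auto. Qed.

Lemma sumR_ge_term n f j : (forall j, (j < n)%nat -> 0 <= f j) -> (j < n)%nat -> f j <= sumR n f.
Proof. induction n; intros H Hj; [lia|]. simpl.
 assert (0 <= sumR n f) by (apply sumR_nonneg; intros; apply H; lia).
 destruct (Nat.eq_dec j n) as [->|Hne]. lra.
 assert (f j <= sumR n f) by (apply IHn; [intros; apply H; lia| lia]).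
 assert (0 <= f n) by (apply H; lia). lra. Qed.

Lemma sumR_swap n m f : sumR n (fun i => sumR m (fun j => f i j)) = sumR m (fun j => sumR n (fun i => f i j)).
Proof. induction n; simpl. symmetry; apply sumR_zero. rewrite IHn. rewrite <- sumR_add. auto. Qed.

Lemma sumR_abs n f : Rabs (sumR n f) <= sumR n (fun j => Rabs (f j)).
Proof. induction n; simpl. rewrite Rabs_R0; lra.
 eapply Rle_trans; [apply Rabs_triang|]. lra. Qed.

Lemma sumR_const n a : sumR n (fun _ => a) = INR n * a.
Proof. induction n; simpl; [lra|]. rewrite IHn. destruct n; simpl; lra. Qed.

Lemma sumR_Id n i x : (i < n)%nat -> sumR n (fun j => Id i j * x j) = x i.
Proof. induction n; intros H; [lia|]. simpl. unfold Id at 2.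
 destruct (Nat.eq_dec i n) as [->|Hne].
 - rewrite Nat.eqb_refl. rewrite (sumR_ext n _ (fun _ => 0)). rewrite sumR_zero; lra.
   intros j Hj. unfold Id. replace (Nat.eqb n j) with false. lra. symmetry; apply Nat.eqb_neq; lia.
 - replace (Nat.eqb i n) with false by (symmetry; apply Nat.eqb_neq; auto). rewrite IHn by lia. lra.
Qed.

Lemma Id_sym i j : Id i j = Id j i.
Proof. unfold Id. rewrite Nat.eqb_sym. auto. Qed.

Lemma sumR_Id' n j x : (j < n)%nat -> sumR n (fun m => x m * Id m j) = x j.
Proof. intros H. rewrite <- (sumR_Id n j x H). apply sumR_ext. intros. rewrite Id_sym. lra. Qed.

Lemma sumR_front n f : sumR (S n) f = f O + sumR n (fun j => f (S j)).
Proof. induction n. simpl. lra. change (sumR (S (S n)) f) with (sumR (S n) f + f (S n)).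
 rewrite IHn. simpl. lra. Qed.

Lemma prodR_front n f : prodR (S n) f = f O * prodR n (fun j => f (S j)).
Proof. induction n. simpl. lra. change (prodR (S (S n)) f) with (prodR (S n) f * f (S n)).
 rewrite IHn. simpl. lra. Qed.

Lemma Un_cv_ext a b l : (forall n, a n = b n) -> Un_cv a l -> Un_cv b l.
Proof. intros H Hc e He. destruct (Hc e He) as [N HN]. exists N. intros n Hn. rewrite <- H. auto. Qed.

Lemma Un_cv_const a : Un_cv (fun _ => a) a.
Proof. intros e He. exists O. intros. unfold Rdist. rewrite Rminus_diag, Rabs_R0. auto. Qed.

Lemma Un_cv_shift u l : Un_cv u l -> Un_cv (fun n => u (S n)) l.
Proof. intros Hc e He. destruct (Hc e He) as [N HN]. exists N. intros n Hn. apply HN. lia. Qed.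

Lemma Un_cv_unshift u l : Un_cv (fun n => u (S n)) l -> Un_cv u l.
Proof. intros Hc e He. destruct (Hc e He) as [N HN]. exists (S N). intros n Hn.
 destruct n. lia. apply HN. lia. Qed.

Lemma Un_cv_abs u l : Un_cv u l -> Un_cv (fun n => Rabs (u n)) (Rabs l).
Proof. intros Hc e He. destruct (Hc e He) as [N HN]. exists N. intros n Hn.
 specialize (HN n Hn). unfold Rdist in *. eapply Rle_lt_trans; [apply Rabs_triang_inv2|]. auto. Qed.

Lemma sumR_cv n (f : nat -> nat -> R) l : (forall j, (j < n)%nat -> Un_cv (fun N => f N j) (l j)) ->
  Un_cv (fun N => sumR n (f N)) (sumR n l).
Proof. induction n; intros H; simpl. apply Un_cv_const.
 apply CV_plus. apply IHn; intros; apply H; lia. apply H; lia. Qed.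

Lemma cv_le_const u l b : (forall n, u n <= b) -> Un_cv u l -> l <= b.
Proof. intros H Hc. eapply Rle_cv_lim; [exact H| exact Hc| apply Un_cv_const]. Qed.

Lemma finite_choice {A} (n : nat) (Phi : nat -> A -> Prop) (a0 : A) :
  (forall j, (j < n)%nat -> exists x, Phi j x) -> exists F : nat -> A, forall j, (j < n)%nat -> Phi j (F j).
Proof. induction n; intros H. exists (fun _ => a0). intros; lia.
 destruct IHn as [F HF]. intros; apply H; lia. destruct (H n (Nat.lt_succ_diag_r n)) as [x Hx].
 exists (fun j => if Nat.eqb j n then x else F j). intros j Hj.
 destruct (Nat.eqb_spec j n). subst; auto. apply HF; lia. Qed.

Lemma finite_eventually n (Q : nat -> nat -> Prop) :
  (forall j, (j < n)%nat -> exists N, forall m, (N <= m)%nat -> Q j m) ->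
  exists N, forall j m, (j < n)%nat -> (N <= m)%nat -> Q j m.
Proof. induction n; intros H. exists O; intros; lia.
 destruct IHn as [N HN]. intros; apply H; lia. destruct (H n (Nat.lt_succ_diag_r n)) as [N' HN'].
 exists (Nat.max N N'). intros j m Hj Hm. destruct (Nat.eq_dec j n). subst; apply HN'; lia. apply HN; lia. Qed.

Definition app (M : nat) (T : nat -> nat -> R) (x : nat -> R) (i : nat) : R :=
  sumR M (fun j => T i j * x j).

Definition goodT (M : nat) (T : nat -> nat -> R) : Prop :=
  (forall i j, (i < M)%nat -> (j < M)%nat -> 0 <= T i j) /\
  (forall i, (i < M)%nat -> sumR M (T i) <= 1) /\
  (forall x, (forall i, (i < M)%nat -> app M T x i <= x i) -> forall i, (i < M)%nat -> 0 <= x i).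

Fixpoint iterv M T (g : nat -> R) (N : nat) : nat -> R :=
  match N with O => g | S N' => fun i => g i + app M T (iterv M T g N') i end.

Fixpoint qv M T (N : nat) : nat -> R :=
  match N with O => fun _ => 1 | S N' => app M T (qv M T N') end.

Fixpoint Sv M T (N : nat) : nat -> R :=
  match N with O => fun _ => 0 | S N' => fun i => Sv M T N' i + qv M T N' i end.

Lemma app_mono M T x y i : goodT M T -> (i < M)%nat -> (forall j, (j < M)%nat -> x j <= y j) ->
  app M T x i <= app M T y i.
Proof. intros [Hnn _] Hi H. apply sumR_le. intros j Hj. apply Rmult_le_compat_l; auto. Qed.

Lemma app_nonneg M T x i : goodT M T -> (i < M)%nat -> (forall j, (j < M)%nat -> 0 <= x j) ->
  0 <= app M T x i.
Proof. intros [Hnn _] Hi H. apply sumR_nonneg. intros j Hj. apply Rmult_le_pos; auto. Qed.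

Lemma app_add M T x y i : app M T (fun j => x j + y j) i = app M T x i + app M T y i.
Proof. unfold app. rewrite <- sumR_add. apply sumR_ext; intros; ring. Qed.
Lemma app_minus M T x y i : app M T (fun j => x j - y j) i = app M T x i - app M T y i.
Proof. unfold app. rewrite <- sumR_minus. apply sumR_ext; intros; ring. Qed.
Lemma app_scal M T a x i : app M T (fun j => a * x j) i = a * app M T x i.
Proof. unfold app. rewrite <- sumR_scal. apply sumR_ext; intros; ring. Qed.
Lemma app_const1 M T i : goodT M T -> (i < M)%nat -> app M T (fun _ => 1) i <= 1.
Proof. intros HT Hi. unfold app. destruct HT as [_ [Hr _]].
 rewrite (sumR_ext _ _ (T i)) by (intros; ring). auto. Qed.

Lemma app_ext M T x y i : (forall j, (j < M)%nat -> x j = y j) -> app M T x i = app M T y i.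
Proof. intros H. apply sumR_ext. intros. rewrite H; auto. Qed.

Lemma qv_bounds M T : goodT M T -> forall N i, (i < M)%nat -> 0 <= qv M T N i <= 1 /\ qv M T (S N) i <= qv M T N i.
Proof. intros HT N. induction N; intros i Hi.
 - simpl. split. lra. apply app_const1; auto.
 - split. split. simpl. apply app_nonneg; auto. intros j Hj; apply IHN; auto.
   apply Rle_trans with (qv M T N i). apply IHN; auto. apply IHN; auto.
   change (app M T (qv M T (S N)) i <= app M T (qv M T N) i). apply app_mono; auto.
   intros j Hj; apply IHN; auto.
Qed.

Lemma qv_small M T : goodT M T -> exists K, forall i, (i < M)%nat -> qv M T K i <= /2.
Proof. intros HT.
 assert (Hl : exists L : nat -> R, forall i, (i < M)%nat -> Un_cv (fun N => qv M T N i) (L i)).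
 { apply (finite_choice M (fun i l => Un_cv (fun N => qv M T N i) l) 0). intros i Hi.
   destruct (decreasing_cv (fun N => qv M T N i)) as [l Hl].
   - intros n. apply qv_bounds; auto.
   - exists 0. intros x [n ->]. unfold opp_seq. assert (H := proj1 (qv_bounds M T HT n i Hi)). lra.
   - exists l; auto. }
 destruct Hl as [L HL].
 assert (Hfix : forall i, (i < M)%nat -> L i = app M T L i).
 { intros i Hi. apply (UL_sequence (fun N => qv M T (S N) i)).
   apply (Un_cv_shift (fun N => qv M T N i)). auto.
   simpl. unfold app. apply sumR_cv. intros j Hj. apply CV_mult. apply Un_cv_const. apply HL; auto. }
 destruct HT as [Hnn [Hr HCP]].
 assert (H1 : forall i, (i < M)%nat -> 0 <= L i).
 { apply HCP. intros i Hi. rewrite <- Hfix; auto. lra. }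
 assert (H2 : forall i, (i < M)%nat -> 0 <= - L i).
 { apply HCP. intros i Hi. rewrite (app_ext _ _ _ (fun j => 0 - L j)) by (intros; ring).
   rewrite app_minus. rewrite <- Hfix; auto. unfold app. rewrite (sumR_ext _ _ (fun _ => 0)) by (intros; ring).
   rewrite sumR_zero. lra. }
 destruct (finite_eventually M (fun i N => qv M T N i <= /2)) as [K HK].
 { intros i Hi. destruct (HL i Hi (/2)) as [N HN]. lra. exists N. intros m Hm.
   specialize (HN m Hm). unfold Rdist in HN. assert (L i = 0) by (specialize (H1 i Hi); specialize (H2 i Hi); lra).
   rewrite H in HN. apply Rabs_def2 in HN. lra. }
 exists K. intros i Hi. apply HK; auto.
Qed.

Lemma Sv_id M T : forall K i, (i < M)%nat -> Sv M T K i - app M T (Sv M T K) i = 1 - qv M T K i.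
Proof. induction K; intros i Hi; simpl.
 - unfold app. rewrite (sumR_ext _ _ (fun _ => 0)) by (intros; ring). rewrite sumR_zero. lra.
 - rewrite app_add. specialize (IHK i Hi). lra.
Qed.

Lemma Sv_nonneg M T : goodT M T -> forall K i, (i < M)%nat -> 0 <= Sv M T K i.
Proof. intros HT; induction K; intros i Hi; simpl. lra.
 assert (H := proj1 (qv_bounds M T HT K i Hi)). specialize (IHK i Hi). lra. Qed.

Lemma super_exists M T : goodT M T -> exists y, forall i, (i < M)%nat -> 0 <= y i /\ 1 + app M T y i <= y i.
Proof. intros HT. destruct (qv_small M T HT) as [K HK].
 exists (fun i => 2 * Sv M T K i). intros i Hi. split.
 assert (H := Sv_nonneg M T HT K i Hi). lra.
 rewrite app_scal. assert (H := Sv_id M T K i Hi). specialize (HK i Hi). lra. Qed.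

Lemma iter_pos_cv M T h b : goodT M T -> 0 <= b -> (forall i, (i < M)%nat -> 0 <= h i <= b) ->
  exists u, forall i, (i < M)%nat -> Un_cv (fun N => iterv M T h N i) (u i).
Proof. intros HT Hb Hh. destruct (super_exists M T HT) as [y Hy].
 assert (Hbd : forall N i, (i < M)%nat -> iterv M T h N i <= b * y i).
 { induction N; intros i Hi; simpl.
   - destruct (Hy i Hi) as [Hy1 Hy2]. assert (0 <= app M T y i) by (apply app_nonneg; auto; intros; apply Hy; auto).
     specialize (Hh i Hi). nra.
   - apply Rle_trans with (b + b * app M T y i).
     + rewrite <- app_scal. assert (app M T (iterv M T h N) i <= app M T (fun j => b * y j) i)
         by (apply app_mono; auto). specialize (Hh i Hi). lra.
     + destruct (Hy i Hi). nra. }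
 assert (Hinc : forall N i, (i < M)%nat -> iterv M T h N i <= iterv M T h (S N) i).
 { induction N; intros i Hi; simpl.
   - assert (0 <= app M T h i) by (apply app_nonneg; auto; intros; apply Hh; auto). lra.
   - assert (app M T (iterv M T h N) i <= app M T (iterv M T h (S N)) i) by (apply app_mono; auto).
     simpl in H. lra. }
 apply (finite_choice M (fun i l => Un_cv (fun N => iterv M T h N i) l) 0). intros i Hi.
 destruct (growing_cv (fun N => iterv M T h N i)) as [l Hl].
 - intros n. apply Hinc; auto.
 - exists (b * y i). intros x [n ->]. apply Hbd; auto.
 - exists l; auto.
Qed.

Lemma iterv_lin M T g1 g2 : forall N i, iterv M T (fun j => g1 j - g2 j) N i = iterv M T g1 N i - iterv M T g2 N i.
Proof. induction N; intros i; simpl. auto.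
 rewrite (app_ext _ _ _ (fun j => iterv M T g1 N j - iterv M T g2 N j)) by (intros; apply IHN).
 rewrite app_minus. ring. Qed.

Lemma fixpoint_exists M T g : goodT M T ->
  exists u, (forall i, (i < M)%nat -> u i = g i + app M T u i) /\
            (forall i, (i < M)%nat -> Un_cv (fun N => iterv M T g N i) (u i)).
Proof. intros HT.
 set (a := sumR M (fun j => Rabs (g j))).
 assert (Ha : forall i, (i < M)%nat -> Rabs (g i) <= a).
 { intros i Hi. apply (sumR_ge_term M (fun j => Rabs (g j))); auto. intros; apply Rabs_pos. }
 assert (Ha0 : 0 <= a) by (apply sumR_nonneg; intros; apply Rabs_pos).
 destruct (iter_pos_cv M T (fun j => g j + a) (2 * a) HT) as [u1 Hu1]. lra.
 { intros i Hi. specialize (Ha i Hi). unfold Rabs in Ha; destruct (Rcase_abs (g i)); lra. }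
 destruct (iter_pos_cv M T (fun j => a) a HT) as [u2 Hu2]. auto. { intros; lra. }
 assert (Hcv : forall i, (i < M)%nat -> Un_cv (fun N => iterv M T g N i) (u1 i - u2 i)).
 { intros i Hi. apply (Un_cv_ext (fun N => iterv M T (fun j => g j + a) N i - iterv M T (fun j => a) N i)).
   intros N. rewrite <- iterv_lin. assert (forall N, iterv M T (fun j => g j + a - a) N i = iterv M T g N i).
   { intros N0. replace (fun j => g j + a - a) with g. auto. apply functional_extensionality. intros; ring. }
   auto. apply CV_minus; auto. }
 exists (fun i => u1 i - u2 i). split; auto.
 intros i Hi. apply (UL_sequence (fun N => iterv M T g (S N) i)).
 apply (Un_cv_shift (fun N => iterv M T g N i)); auto.
 simpl. apply CV_plus. apply Un_cv_const. unfold app. apply sumR_cv. intros j Hj.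
 apply CV_mult. apply Un_cv_const. apply Hcv; auto.
Qed.

Definition Tm rho (P : policy) i j := Dfun rho P i * trans P i j.
Definition sfac delta (P : policy) i := if ppsi P i then delta else 1.

Lemma path_sum_ext M N F G : (forall l, F l = G l) -> path_sum M N F = path_sum M N G.
Proof. revert F G; induction N; intros F G H; simpl; auto. apply sumR_ext. intros j _. apply IHN. auto. Qed.
Lemma path_sum_add M N F G : path_sum M N (fun l => F l + G l) = path_sum M N F + path_sum M N G.
Proof. revert F G; induction N; intros F G; simpl; auto. rewrite <- sumR_add. apply sumR_ext. intros j _.
 apply (IHN (fun l => F (j :: l)) (fun l => G (j :: l))). Qed.
Lemma path_sum_scal M N a F : path_sum M N (fun l => a * F l) = a * path_sum M N F.
Proof. revert F; induction N; intros F; simpl; auto. rewrite <- sumR_scal. apply sumR_ext. intros j _.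
 apply (IHN (fun l => F (j :: l))). Qed.

Lemma path_sum_S M N F : path_sum M (S N) F = sumR M (fun j => path_sum M N (fun l => F (j :: l))).
Proof. reflexivity. Qed.

Lemma prob_split N (Tr : nat -> nat -> R) i p :
  prodR (S N) (fun m => Tr (nth m (i :: p) O) (nth (S m) (i :: p) O)) =
  Tr i (nth O p O) * prodR N (fun m => Tr (nth m p O) (nth (S m) p O)).
Proof. rewrite prodR_front. reflexivity. Qed.

Lemma pay_split N (Uf Df : nat -> R) i p :
  sumR (S (S N)) (fun n => Uf (nth n (i :: p) O) * prodR n (fun m => Df (nth m (i :: p) O))) =
  Uf i + Df i * sumR (S N) (fun n => Uf (nth n p O) * prodR n (fun m => Df (nth m p O))).
Proof. rewrite sumR_front. simpl nth at 1. simpl prodR at 1. rewrite <- sumR_scal.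
 f_equal. ring. apply sumR_ext. intros n _. rewrite prodR_front. simpl. ring. Qed.

Definition rows_ok M (P : policy) := forall i, (i < M)%nat -> prob_vec M (fun j => trans P i j).

Lemma path_prob M (P : policy) : rows_ok M P -> forall N j, (j < M)%nat ->
  path_sum M N (fun l => prodR N (fun m => trans P (nth m (j :: l) O) (nth (S m) (j :: l) O))) = 1.
Proof. intros HP N. induction N; intros j Hj. simpl. auto.
 simpl path_sum. rewrite <- (proj2 (HP j Hj)).
 apply sumR_ext. intros j' Hj'.
 rewrite (path_sum_ext _ _ _ (fun l => trans P j j' * prodR N (fun m => trans P (nth m (j' :: l) O) (nth (S m) (j' :: l) O)))).
 rewrite path_sum_scal, IHN; auto. ring.
 intros l. apply (prob_split N (trans P) j (j' :: l)).
Qed.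

Lemma pe_zero M rho c k P i : partial_expect M rho c k P i O = Ufun c k P i.
Proof. unfold partial_expect. simpl. ring. Qed.

Lemma pe_rec M rho c k P i N : rows_ok M P -> (i < M)%nat ->
  partial_expect M rho c k P i (S N) = Ufun c k P i + app M (Tm rho P) (fun j => partial_expect M rho c k P j N) i.
Proof. intros HP Hi. unfold partial_expect at 1. cbv zeta. rewrite path_sum_S.
 rewrite (sumR_ext _ _ (fun j => Ufun c k P i * trans P i j + Tm rho P i j * partial_expect M rho c k P j N)).
 - rewrite sumR_add, sumR_scal. destruct (HP i Hi) as [_ Hs]. replace (sumR M (trans P i)) with 1 by (symmetry; exact Hs). unfold app. ring.
 - intros j Hj.
   rewrite (path_sum_ext _ _ _ (fun l => Ufun c k P i * trans P i j * prodR N (fun m => trans P (nth m (j :: l) O) (nth (S m) (j :: l) O))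
      + Tm rho P i j * (prodR N (fun m => trans P (nth m (j :: l) O) (nth (S m) (j :: l) O)) *
          sumR (S N) (fun n => Ufun c k P (nth n (j :: l) O) * prodR n (fun m => Dfun rho P (nth m (j :: l) O)))))).
   + rewrite path_sum_add, path_sum_scal, path_sum_scal, path_prob; auto. unfold partial_expect. ring.
   + intros l. cbv beta. rewrite (prob_split N (trans P) i (j :: l)).
     rewrite (pay_split N (Ufun c k P) (Dfun rho P) i (j :: l)). unfold Tm. simpl nth at 1. ring.
Qed.

Lemma pe_iterv M rho c k P : rows_ok M P -> forall N i, (i < M)%nat ->
  partial_expect M rho c k P i N = iterv M (Tm rho P) (Ufun c k P) N i.
Proof. intros HP N; induction N; intros i Hi. apply pe_zero.
 rewrite pe_rec; auto. simpl. f_equal. apply app_ext. auto. Qed.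

Lemma min_exists (x : nat -> R) n : (0 < n)%nat -> exists i0, (i0 < n)%nat /\ forall j, (j < n)%nat -> x i0 <= x j.
Proof. induction n; intros H. lia. destruct n. exists O. split. lia. intros j Hj. replace j with O by lia. lra.
 destruct IHn as [i0 [Hi0 Hm]]. lia.
 destruct (Rle_dec (x i0) (x (S n))).
 - exists i0. split. lia. intros j Hj. destruct (Nat.eq_dec j (S n)). subst; auto. apply Hm; lia.
 - exists (S n). split. lia. intros j Hj. destruct (Nat.eq_dec j (S n)). subst; lra. specialize (Hm j ltac:(lia)). lra.
Qed.

Definition H2P M (P : policy) := forall i, (i < M)%nat -> ppsi P i = true ->
    exists j, (j < M)%nat /\ ppsi P j = false /\ clos_refl_trans nat (Bedge M P) i j.

Lemma Dfun_pos rho P i : 0 < rho -> 0 < Dfun rho P i <= 1.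
Proof. intros. unfold Dfun. destruct (ppsi P i). lra.
 split. apply Rinv_0_lt_compat; lra. rewrite <- Rinv_1. apply Rinv_le_contravar; lra. Qed.

Lemma goodT_P M rho P : 0 < rho -> rows_ok M P -> H2P M P -> goodT M (Tm rho P).
Proof. intros Hrho HP H2. split; [|split].
 - intros i j Hi Hj. unfold Tm. apply Rmult_le_pos. apply Rlt_le, Dfun_pos; auto. apply (proj1 (HP i Hi)); auto.
 - intros i Hi. change (sumR M (fun j => Dfun rho P i * trans P i j) <= 1). rewrite sumR_scal. destruct (HP i Hi) as [_ Hs]. cbv beta in Hs.
   assert (Hs' : sumR M (trans P i) = 1) by exact Hs. try rewrite Hs; try rewrite Hs'.
   assert (H := Dfun_pos rho P i Hrho). lra.
 - intros x Hx i Hi.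
   destruct (min_exists x M) as [i0 [Hi0 Hmin]]. lia.
   destruct (Rle_dec 0 (x i0)) as [Hpos|Hneg]. specialize (Hmin i Hi). lra.
   set (m := x i0). assert (Hm : m < 0) by (unfold m; lra).
   assert (Key : forall a, (a < M)%nat -> x a = m -> ppsi P a = true /\ forall b, (b < M)%nat -> pz P a b <> 0 -> x b = m).
   { intros a Ha Hxa. specialize (Hx a Ha). unfold app, Tm in Hx.
     destruct (HP a Ha) as [Hnn Hs]. cbv beta in Hs.
     assert (Hlow : sumR M (fun j => trans P a j * (x j - m)) = sumR M (fun j => trans P a j * x j) - m).
     { rewrite (sumR_ext _ _ (fun j => trans P a j * x j - m * trans P a j)) by (intros; ring).
       rewrite sumR_minus, sumR_scal. assert (Hs' : sumR M (trans P a) = 1) by exact Hs. try rewrite Hs; try rewrite Hs'. ring. }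
     assert (Hnn2 : forall j, (j < M)%nat -> 0 <= trans P a j * (x j - m)).
     { intros j Hj. apply Rmult_le_pos. apply Hnn; auto. specialize (Hmin j Hj). unfold m; lra. }
     assert (H0s := sumR_nonneg _ _ Hnn2).
     rewrite (sumR_ext _ _ (fun j => Dfun rho P a * (trans P a j * x j))) in Hx by (intros; ring).
     rewrite sumR_scal in Hx.
     unfold Dfun in Hx. destruct (ppsi P a) eqn:Ep.
     - split; auto. intros b Hb Hz.
       assert (Hle : trans P a b * (x b - m) <= 0).
       { eapply Rle_trans. apply (sumR_ge_term M (fun j => trans P a j * (x j - m))); auto. lra. }
       assert (Heq : trans P a b * (x b - m) = 0) by (specialize (Hnn2 b Hb); lra).
       unfold trans in Heq. rewrite Ep in Heq. apply Rmult_integral in Heq. destruct Heq. contradiction. lra.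
     - exfalso. assert (Hd : 0 < / (1 + rho) < 1).
       { split. apply Rinv_0_lt_compat; lra. rewrite <- Rinv_1. apply Rinv_lt_contravar; lra. }
       nra. }
   destruct (Key i0 Hi0 eq_refl) as [Hps _].
   destruct (H2 i0 Hi0 Hps) as [j [Hj [Hpj Hpath]]].
   assert (Hprop : forall a b, clos_refl_trans nat (Bedge M P) a b -> x a = m -> x b = m).
   { intros a b Hab. induction Hab; auto.
     intros Hxa. destruct H as [Hx0 [Hy0 Hz]]. apply (proj2 (Key x0 Hx0 Hxa)); auto. }
   assert (x j = m) by (apply (Hprop i0); auto). destruct (Key j Hj H) as [Hc _]. congruence.
Qed.

Lemma Amat_form M rho delta P x i : (i < M)%nat ->
  matvec M (Amat rho delta P) x i = sfac delta P i * (x i - app M (Tm rho P) x i).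
Proof. intros Hi. unfold matvec, Amat, app, Tm, sfac, Dfun, trans. destruct (ppsi P i).
 - rewrite (sumR_ext _ _ (fun j => delta * (Id i j * x j - 1 * pz P i j * x j))) by (intros; ring).
   rewrite sumR_scal, sumR_minus, sumR_Id; auto.
 - rewrite (sumR_ext _ _ (fun j => 1 * (Id i j * x j - / (1 + rho) * pw P i j * x j))) by (intros; unfold Rdiv; ring).
   rewrite sumR_scal, sumR_minus, sumR_Id; auto.
Qed.

Lemma bvec_form delta c k P i : bvec delta c k P i = sfac delta P i * Ufun c k P i.
Proof. unfold bvec, sfac, Ufun. destruct (ppsi P i); ring. Qed.

Lemma sfac_pos delta P i : 0 < delta -> 0 < sfac delta P i.
Proof. unfold sfac; destruct (ppsi P i); lra. Qed.

Lemma matvec_minus M A x y i : matvec M A (fun j => x j - y j) i = matvec M A x i - matvec M A y i.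
Proof. unfold matvec. rewrite <- sumR_minus. apply sumR_ext; intros; ring. Qed.

Lemma matvec_ext M A x y i : (forall j, (j < M)%nat -> x j = y j) -> matvec M A x i = matvec M A y i.
Proof. intros H. apply sumR_ext. intros. rewrite H; auto. Qed.

Lemma CP_A M rho delta P x : 0 < delta -> goodT M (Tm rho P) ->
  (forall i, (i < M)%nat -> 0 <= matvec M (Amat rho delta P) x i) -> forall i, (i < M)%nat -> 0 <= x i.
Proof. intros Hd HT H. apply (proj2 (proj2 HT)). intros i Hi. specialize (H i Hi).
 rewrite Amat_form in H; auto. assert (Hs := sfac_pos delta P i Hd).
 apply Rmult_le_reg_l with (sfac delta P i); auto. lra. Qed.

Lemma inj_A M rho delta P x : 0 < delta -> goodT M (Tm rho P) ->
  (forall i, (i < M)%nat -> matvec M (Amat rho delta P) x i = 0) -> forall i, (i < M)%nat -> x i = 0.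
Proof. intros Hd HT H i Hi.
 assert (H1 := CP_A M rho delta P x Hd HT ltac:(intros j Hj; rewrite H; auto; lra) i Hi).
 assert (H2 := CP_A M rho delta P (fun j => 0 - x j) Hd HT ltac:(intros j Hj; rewrite matvec_minus, H; auto;
   unfold matvec; rewrite (sumR_ext _ _ (fun _ => 0)) by (intros; ring); rewrite sumR_zero; lra) i Hi).
 cbv beta in H2. lra. Qed.

Lemma sol_exists M rho delta c k P : 0 < delta -> rows_ok M P -> goodT M (Tm rho P) ->
  exists u, (forall i, (i < M)%nat -> matvec M (Amat rho delta P) u i = bvec delta c k P i) /\
            (forall i, (i < M)%nat -> has_value M rho c k P i (u i)).
Proof. intros Hd HP HT. destruct (fixpoint_exists M (Tm rho P) (Ufun c k P) HT) as [u [Hfix Hcv]].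
 exists u. split.
 - intros i Hi. rewrite Amat_form, bvec_form; auto. rewrite (Hfix i Hi) at 1. f_equal. ring.
 - intros i Hi. unfold has_value. apply (Un_cv_ext (fun N => iterv M (Tm rho P) (Ufun c k P) N i)).
   intros N. symmetry. apply pe_iterv; auto. auto.
Qed.

Lemma matvec_assoc M A B x i :
  matvec M A (fun m => matvec M B x m) i = matvec M (matmul M A B) x i.
Proof. unfold matvec, matmul.
 rewrite (sumR_ext _ _ (fun m => sumR M (fun n => A i m * B m n * x n))).
 rewrite sumR_swap. apply sumR_ext. intros n _. rewrite <- sumR_scal_r. apply sumR_ext; intros; ring.
 intros m _. rewrite <- sumR_scal. apply sumR_ext; intros; ring.
Qed.

Lemma matvec_Id M A x i : (i < M)%nat -> (forall l, (l < M)%nat -> A i l = Id i l) -> matvec M A x i = x i.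
Proof. intros Hi H. unfold matvec. rewrite (sumR_ext _ _ (fun j => Id i j * x j)). apply sumR_Id; auto.
 intros; rewrite H; auto. Qed.

Lemma inverse_exists M rho delta P : 0 < delta -> goodT M (Tm rho P) ->
  exists B, is_inverse M (Amat rho delta P) B.
Proof. intros Hd HT.
 destruct (finite_choice M (fun j col => forall l, (l < M)%nat -> matvec M (Amat rho delta P) col l = Id l j) (fun _ => 0)) as [C HC].
 { intros j Hj. destruct (fixpoint_exists M (Tm rho P) (fun l => Id l j / sfac delta P l) HT) as [u [Hfix _]].
   exists u. intros l Hl. rewrite Amat_form; auto. rewrite (Hfix l Hl) at 1.
   assert (Hs := sfac_pos delta P l Hd). field. lra. }
 exists (fun i j => C j i). intros i j Hi Hj. split.
 - unfold matmul. apply HC; auto.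
 - set (x := fun m => matmul M (fun i j => C j i) (Amat rho delta P) m j - Id m j).
   assert (Hx : forall l, (l < M)%nat -> matvec M (Amat rho delta P) x l = 0).
   { intros l Hl. unfold x. rewrite matvec_minus.
     change (matvec M (Amat rho delta P) (fun m => matvec M (fun i j => C j i) (fun n => Amat rho delta P n j) m) l
       - matvec M (Amat rho delta P) (fun m => Id m j) l = 0).
     rewrite matvec_assoc. rewrite matvec_Id; auto.
     unfold matvec. rewrite sumR_Id'; auto. ring.
     intros l' Hl'. unfold matmul. apply HC; auto. }
   assert (H := inj_A M rho delta P x Hd HT Hx i Hi). unfold x in H. lra.
Qed.

Theorem corollary4p4 (M : nat) (rho delta : R)
  (W Z : nat -> (nat -> R) -> Prop) (Dset : nat -> bool -> Prop)
  (c k : nat -> (nat -> R) -> R)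
  (Hrho : 0 < rho) (Hdelta : 0 < delta)
  (HW : forall i, (i < M)%nat -> (exists p, W i p) /\ forall p, W i p -> prob_vec M p)
  (HZ : forall i, (i < M)%nat -> (exists p, Z i p) /\ forall p, Z i p -> prob_vec M p)
  (HD : forall i, (i < M)%nat -> exists d, Dset i d)
  (H0h : H0 M W Z Dset rho delta)
  (H1h : H1 M W Z Dset rho delta c k)
  (H2h : H2 M W Z Dset)
  (Pseq : nat -> policy) (vseq : nat -> nat -> R)
  (HPI : policy_iteration M W Z Dset rho delta c k Pseq vseq) :
  (forall P, in_Pset M W Z Dset P -> forall i, (i < M)%nat ->
     exists r, has_value M rho c k P i r) /\
  exists v : nat -> R,
    forall i, (i < M)%nat ->
      is_lub (fun r => exists P, in_Pset M W Z Dset P /\ has_value M rho c k P i r) (v i) /\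
      Un_cv (fun l => vseq l i) (v i).
Proof.
 assert (Hrows : forall P, in_Pset M W Z Dset P -> rows_ok M P).
 { intros P HP i Hi. destruct (HP i Hi) as [Hw [Hz _]]. unfold trans. destruct (ppsi P i).
   apply (proj2 (HZ i Hi)); auto. apply (proj2 (HW i Hi)); auto. }
 assert (HG : forall P, in_Pset M W Z Dset P -> goodT M (Tm rho P)).
 { intros P HP. apply goodT_P; auto. intros i Hi Hps. apply H2h; auto. }
 destruct H0h as [C0 HC0]. destruct H1h as [[CH HCH] _].
 assert (Hbound : forall P x, in_Pset M W Z Dset P ->
     (forall i, (i < M)%nat -> matvec M (Amat rho delta P) x i = bvec delta c k P i) ->
     forall i, (i < M)%nat -> Rabs (x i) <= INR M * (C0 * CH)).
 { intros P x HP Hx i Hi. destruct (inverse_exists M rho delta P Hdelta (HG P HP)) as [B HB].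
   set (y := fun i => matvec M B (bvec delta c k P) i).
   assert (Hy : forall l, (l < M)%nat -> matvec M (Amat rho delta P) y l = bvec delta c k P l).
   { intros l Hl. unfold y. rewrite matvec_assoc. apply matvec_Id; auto. intros l' Hl'. apply HB; auto. }
   assert (Hxy : x i = y i).
   { assert (H := inj_A M rho delta P (fun j => x j - y j) Hdelta (HG P HP)
        ltac:(intros l Hl; rewrite matvec_minus, Hx, Hy; auto; ring) i Hi). cbv beta in H. lra. }
   rewrite Hxy. unfold y, matvec. eapply Rle_trans. apply sumR_abs. rewrite <- sumR_const.
   apply sumR_le. intros j Hj. rewrite Rabs_mult. apply Rmult_le_compat; try apply Rabs_pos.
   apply (HC0 P B HP HB); auto. apply (HCH P HP j j Hj Hj). }
 assert (Hident : forall P x, in_Pset M W Z Dset P ->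
     (forall i, (i < M)%nat -> matvec M (Amat rho delta P) x i = bvec delta c k P i) ->
     forall i, (i < M)%nat -> has_value M rho c k P i (x i)).
 { intros P x HP Hx i Hi. destruct (sol_exists M rho delta c k P Hdelta (Hrows P HP) (HG P HP)) as [u [Hu Hv]].
   assert (H := inj_A M rho delta P (fun j => x j - u j) Hdelta (HG P HP)
        ltac:(intros l Hl; rewrite matvec_minus, Hx, Hu; auto; ring) i Hi). cbv beta in H.
   replace (x i) with (u i) by lra. auto. }
 split.
 { intros P HP i Hi. destruct (sol_exists M rho delta c k P Hdelta (Hrows P HP) (HG P HP)) as [u [_ Hv]].
   exists (u i); auto. }
 assert (HPs : forall n, in_Pset M W Z Dset (Pseq (S n)) /\
     (forall i, (i < M)%nat -> is_lub (fun r => exists P, in_Pset M W Z Dset P /\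
                          r = PIobj M rho delta c k P (vseq n) i)
              (PIobj M rho delta c k (Pseq (S n)) (vseq n) i)) /\
     (forall i, (i < M)%nat -> matvec M (Amat rho delta (Pseq (S n))) (vseq (S n)) i = bvec delta c k (Pseq (S n)) i)).
 { intros n. destruct (HPI (S n) ltac:(lia)) as [A1 [A2 A3]]. replace (S n - 1)%nat with n in A2 by lia. auto. }
 assert (Hmono : forall n i, (i < M)%nat -> vseq (S n) i <= vseq (S (S n)) i).
 { intros n i Hi. destruct (HPs n) as [P1 [_ E1]]. destruct (HPs (S n)) as [P2 [L2 E2]].
   assert (Hge : forall j, (j < M)%nat -> 0 <= vseq (S (S n)) j - vseq (S n) j).
   { apply (CP_A M rho delta (Pseq (S (S n))) (fun j => vseq (S (S n)) j - vseq (S n) j) Hdelta (HG _ P2)).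
     intros l Hl. rewrite matvec_minus, E2; auto.
     destruct (L2 l Hl) as [Hub _]. specialize (Hub (PIobj M rho delta c k (Pseq (S n)) (vseq (S n)) l)
       (ex_intro _ (Pseq (S n)) (conj P1 eq_refl))).
     unfold PIobj in Hub. rewrite E1 in Hub; auto. lra. }
   specialize (Hge i Hi). lra. }
 assert (Hbd : forall n i, (i < M)%nat -> Rabs (vseq (S n) i) <= INR M * (C0 * CH)).
 { intros n i Hi. destruct (HPs n) as [P1 [_ E1]]. apply (Hbound (Pseq (S n))); auto. }
 destruct (finite_choice M (fun i l => Un_cv (fun n => vseq (S n) i) l) 0) as [v Hv].
 { intros i Hi. destruct (growing_cv (fun n => vseq (S n) i)) as [l Hl].
   - intros n. apply Hmono; auto.
   - exists (INR M * (C0 * CH)). intros x [n ->]. specialize (Hbd n i Hi).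
     unfold Rabs in Hbd. destruct (Rcase_abs (vseq (S n) i)); lra.
   - exists l; auto. }
 assert (Hkey : forall P, in_Pset M W Z Dset P -> forall i, (i < M)%nat -> PIobj M rho delta c k P v i <= 0).
 { intros P HP i Hi.
   assert (Hz : CH * sumR M (fun j => Rabs (v j - v j)) = 0).
   { rewrite (sumR_ext _ _ (fun _ => 0)). rewrite sumR_zero. lra. intros. rewrite Rminus_diag, Rabs_R0. auto. }
   rewrite <- Hz.
   apply (@Rle_cv_lim (fun n => PIobj M rho delta c k P (vseq (S n)) i)
                     (fun n => CH * sumR M (fun j => Rabs (vseq (S (S n)) j - vseq (S n) j)))
                     _ (CH * sumR M (fun j => Rabs (v j - v j)))).
   - intros n. destruct (HPs n) as [P1 [_ E1]]. destruct (HPs (S n)) as [P2 [L2 E2]].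
     destruct (L2 i Hi) as [Hub _]. specialize (Hub (PIobj M rho delta c k P (vseq (S n)) i)
       (ex_intro _ P (conj HP eq_refl))).
     eapply Rle_trans. exact Hub.
     replace (PIobj M rho delta c k (Pseq (S (S n))) (vseq (S n)) i) with
       (matvec M (Amat rho delta (Pseq (S (S n)))) (fun j => vseq (S (S n)) j - vseq (S n) j) i).
     + unfold matvec. eapply Rle_trans. apply Rle_abs. eapply Rle_trans. apply sumR_abs.
       rewrite <- sumR_scal. apply sumR_le. intros j Hj. rewrite Rabs_mult.
       apply Rmult_le_compat_r. apply Rabs_pos. apply (HCH _ P2 i j Hi Hj).
     + rewrite matvec_minus, E2; auto. unfold PIobj. ring.
   - unfold PIobj. apply CV_plus; [|apply Un_cv_const].
     apply (Un_cv_ext (fun n => - matvec M (Amat rho delta P) (vseq (S n)) i)). auto.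
     apply (Un_cv_ext (opp_seq (fun n => matvec M (Amat rho delta P) (vseq (S n)) i))). intros; reflexivity.
     apply CV_opp. unfold matvec. apply sumR_cv. intros j Hj. apply CV_mult. apply Un_cv_const. apply Hv; auto.
   - apply CV_mult. apply Un_cv_const. apply sumR_cv. intros j Hj. apply Un_cv_abs. apply CV_minus.
     apply (Un_cv_shift (fun n => vseq (S n) j)). apply Hv; auto. apply Hv; auto. }
 exists v. intros i Hi. split; [split|].
 - intros r [P [HP Hr]]. destruct (sol_exists M rho delta c k P Hdelta (Hrows P HP) (HG P HP)) as [u [Hu Huv]].
   rewrite (UL_sequence _ _ _ Hr (Huv i Hi)).
   assert (H := CP_A M rho delta P (fun j => v j - u j) Hdelta (HG P HP)
     ltac:(intros l Hl; rewrite matvec_minus, Hu; auto; specialize (Hkey P HP l Hl); unfold PIobj in Hkey; lra) i Hi).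
   cbv beta in H. lra.
 - intros ub Hub. apply (cv_le_const (fun n => vseq (S n) i)); [|apply Hv; auto].
   intros n. apply Hub. destruct (HPs n) as [P1 [_ E1]]. exists (Pseq (S n)). split; auto.
 - apply Un_cv_unshift. apply Hv; auto.
Qed.
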